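(* Let $\mathbb{F}$ be an algebraically closed field of characteristic zero and $J_1=E_{12}$. Let $\underline{A}=(J_1,A_2,A_3)$ and $\underline{B}=(J_1,B_2,B_3)$ be elements of $\mathcal{N}_3^3$ such that $f(\underline{A})=f(\underline{B})$ for all $f\in S_{3,3}$. Then $f(\underline{A})=f(\underline{B})$ for all $f\in P_{3,3}$.
   Context: $E_{ij}$ is the $3\times3$ matrix unit. $\mathcal{N}_3^3$ is the set of triples of nilpotent $3\times3$ matrices over $\mathbb{F}$. $\mathrm{tr}(Y_{i_1}\cdots Y_{i_r})$ denotes the function $\underline{A}\mapsto\mathrm{tr}(A_{i_1}\cdots A_{i_r})$. $S_{3,3}$ is the set consisting of: $\mathrm{tr}(Y_iY_j),\ \mathrm{tr}(Y_i^2Y_j),\ \mathrm{tr}(Y_iY_j^2),\ \mathrm{tr}(Y_i^2Y_j^2),\ \mathrm{tr}(Y_i^2Y_j^2Y_iY_j)$ for $1\le i<j\le3$; $\mathrm{tr}(Y_1Y_2Y_3)$, $\mathrm{tr}(Y_1Y_3Y_2)$; $\mathrm{tr}(Y_i^2Y_jY_k)$ for $\{i,j,k\}=\{1,2,3\}$; $\mathrm{tr}(Y_1^2Y_2Y_1Y_3)$, $\mathrm{tr}(Y_2^2Y_1Y_2Y_3)$, $\mathrm{tr}(Y_3^2Y_1Y_3Y_2)$. $P_{3,3}=S_{3,3}\sqcup P'_{3,3}$, where $P'_{3,3}$ consists of $\mathrm{tr}(Y_i^2Y_j^2Y_k)$ and $\mathrm{tr}(Y_i^2Y_j^2Y_iY_k)$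 for $\{i,j,k\}=\{1,2,3\}$, and $\mathrm{tr}(Y_1^2Y_2^2Y_3^2)$. *)

(* Defs.v *)
From mathcomp Require Import all_boot all_algebra.
Set Implicit Arguments. Unset Strict Implicit. Unset Printing Implicit Defensive.
Import GRing.Theory.
Local Open Scope ring_scope.

Definition nilpotent_mx (F : fieldType) (n : nat) (A : 'M[F]_n) : Prop :=
  exists k : nat, A ^+ k = 0.

(* The matrix unit E_{12} (indices 1..3 in the paper, 0..2 here). *)
Definition E12 (F : fieldType) : 'M[F]_3 := delta_mx 0 1.

Definition sel3 (F : fieldType) (A1 A2 A3 : 'M[F]_3) (i : nat) : 'M[F]_3 :=
  match i with 1 => A1 | 2 => A2 | _ => A3 end.

(* tr(Y_{i_1} ... Y_{i_r}) evaluated at the triple (A1,A2,A3);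
   a word is a list of indices in {1,2,3}. *)
Definition trw (F : fieldType) (A1 A2 A3 : 'M[F]_3) (w : seq nat) : F :=
  \tr (\prod_(i <- w) sel3 A1 A2 A3 i).

Definition pairs3 : seq (nat * nat) := [:: (1,2); (1,3); (2,3)]%N.
Definition perms3 : seq (nat * nat * nat) :=
  [:: (1,2,3); (1,3,2); (2,1,3); (2,3,1); (3,1,2); (3,2,1)]%N.

Definition S33 : seq (seq nat) :=
  flatten [seq [:: [:: i; j]; [:: i; i; j]; [:: i; j; j]; [:: i; i; j; j];
                  [:: i; i; j; j; i; j]] | '(i, j) <- pairs3]
  ++ [:: [:: 1; 2; 3]; [:: 1; 3; 2]]%N
  ++ [seq [:: i; i; j; k] | '(i, j, k) <- perms3]
  ++ [:: [:: 1; 1; 2; 1; 3]; [:: 2; 2; 1; 2; 3]; [:: 3; 3; 1; 3; 2]]%N.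

Definition P'33 : seq (seq nat) :=
  flatten [seq [:: [:: i; i; j; j; k]; [:: i; i; j; j; i; k]] | '(i, j, k) <- perms3]
  ++ [:: [:: 1; 1; 2; 2; 3; 3]]%N.

Definition P33 : seq (seq nat) := S33 ++ P'33.

(* Main.v *)
Require Import Defs.
From mathcomp Require Import all_boot all_algebra ring.
Set Implicit Arguments. Unset Strict Implicit. Unset Printing Implicit Defensive.
Import GRing.Theory.
Local Open Scope ring_scope.

Definition mx3 {F : fieldType} (a b c d e f g h i : F) : 'M[F]_3 :=
  \matrix_(r < 3, s < 3) nth 0 (nth [::] [:: [:: a; b; c]; [:: d; e; f]; [:: g; h; i]] r) s.
Definition i0 : 'I_3 := @Ordinal 3 0 isT.
Definition i1 : 'I_3 := @Ordinal 3 1 isT.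
Definition i2 : 'I_3 := @Ordinal 3 2 isT.
Lemma mx3E (F : fieldType) (A : 'M[F]_3) : A = mx3 (A i0 i0) (A i0 i1) (A i0 i2) (A i1 i0) (A i1 i1) (A i1 i2)
   (A i2 i0) (A i2 i1) (A i2 i2).
Proof.
apply/matrixP => r s; rewrite mxE.
by case: r => [[|[|[|//]]] Hr]; case: s => [[|[|[|//]]] Hs] /=; congr (A _ _); apply: val_inj.
Qed.
Lemma mul3 (F : fieldType) (a b c d e f g h i a' b' c' d' e' f' g' h' i' : F) :
  mx3 a b c d e f g h i * mx3 a' b' c' d' e' f' g' h' i' =
  mx3 (a*a'+b*d'+c*g') (a*b'+b*e'+c*h') (a*c'+b*f'+c*i')
      (d*a'+e*d'+f*g') (d*b'+e*e'+f*h') (d*c'+e*f'+f*i')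
      (g*a'+h*d'+i*g') (g*b'+h*e'+i*h') (g*c'+h*f'+i*i').
Proof.
apply/matrixP => r s; rewrite -mulmxE !mxE !big_ord_recr big_ord0 /= !mxE.
by case: r => [[|[|[|//]]] Hr]; case: s => [[|[|[|//]]] Hs] /=; rewrite add0r.
Qed.
Lemma tr3 (F : fieldType) (a b c d e f g h i : F) : \tr (mx3 a b c d e f g h i) = a + e + i.
Proof. by rewrite /mxtrace !big_ord_recr big_ord0 /= !mxE add0r. Qed.
Lemma one3 (F : fieldType) : (1 : 'M[F]_3) = mx3 1 0 0 0 1 0 0 0 1.
Proof.
apply/matrixP => r s; rewrite !mxE.
by case: r => [[|[|[|//]]] Hr]; case: s => [[|[|[|//]]] Hs].
Qed.
Lemma E3 (F : fieldType) : E12 F = mx3 0 1 0 0 0 0 0 0 0.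
Proof.
apply/matrixP => r s; rewrite !mxE.
by case: r => [[|[|[|//]]] Hr]; case: s => [[|[|[|//]]] Hs].
Qed.

Record m3 (F : Type) := M3 { a00 : F; a01 : F; a02 : F; a10 : F; a11 : F; a12 : F;
  a20 : F; a21 : F; a22 : F }.
Definition mulr3 {F : fieldType} (p q : m3 F) : m3 F :=
  let: M3 a b c d e f g h i := p in let: M3 a' b' c' d' e' f' g' h' i' := q in
  M3 (a*a'+b*d'+c*g') (a*b'+b*e'+c*h') (a*c'+b*f'+c*i')
      (d*a'+e*d'+f*g') (d*b'+e*e'+f*h') (d*c'+e*f'+f*i')
      (g*a'+h*d'+i*g') (g*b'+h*e'+i*h') (g*c'+h*f'+i*i').
Definition tofm {F : fieldType} (p : m3 F) : 'M[F]_3 :=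
  let: M3 a b c d e f g h i := p in mx3 a b c d e f g h i.
Definition ofm {F : fieldType} (A : 'M[F]_3) : m3 F :=
  M3 (A i0 i0) (A i0 i1) (A i0 i2) (A i1 i0) (A i1 i1) (A i1 i2) (A i2 i0) (A i2 i1) (A i2 i2).
Definition trr {F : fieldType} (p : m3 F) : F := let: M3 a _ _ _ e _ _ _ i := p in a + e + i.
Definition oner {F : fieldType} : m3 F := M3 1 0 0 0 1 0 0 0 1.
Definition Er {F : fieldType} : m3 F := M3 0 1 0 0 0 0 0 0 0.
Definition selr {F : fieldType} (x y : m3 F) (i : nat) : m3 F :=
  match i with 1 => Er | 2 => x | _ => y end.
Definition wordr {F : fieldType} (x y : m3 F) (w : seq nat) : m3 F :=
  foldr (fun i acc => mulr3 (selr x y i) acc) oner w.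

Lemma ofmK (F : fieldType) (A : 'M[F]_3) : tofm (ofm A) = A.
Proof. by rewrite [RHS]mx3E. Qed.
Lemma tofm_mul (F : fieldType) (p q : m3 F) : tofm p * tofm q = tofm (mulr3 p q).
Proof. by case: p; case: q => * /=; rewrite mul3. Qed.
Lemma prod_r (F : fieldType) (X Y : 'M[F]_3) w :
  \prod_(i <- w) sel3 (E12 F) X Y i = tofm (wordr (ofm X) (ofm Y) w).
Proof.
elim: w => [|i w IH]; first by rewrite big_nil one3.
rewrite big_cons IH /= -tofm_mul; congr (_ * _).
by case: i => [|[|[|i]]] /=; rewrite -?mx3E ?E3.
Qed.
Lemma trw_r (F : fieldType) (X Y : 'M[F]_3) w :
  trw (E12 F) X Y w = trr (wordr (ofm X) (ofm Y) w).
Proof. by rewrite /trw prod_r; case: (wordr _ _ _) => * /=; rewrite tr3. Qed.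
Lemma trm_r (F : fieldType) (X : 'M[F]_3) : \tr X = trr (ofm X).
Proof. by rewrite -{1}(ofmK X); case: (ofm X) => * /=; rewrite tr3. Qed.
Lemma trm2_r (F : fieldType) (X : 'M[F]_3) : \tr (X * X) = trr (mulr3 (ofm X) (ofm X)).
Proof. by rewrite -{1 2}(ofmK X) tofm_mul; case: (mulr3 _ _) => * /=; rewrite tr3. Qed.
Lemma trm3_r (F : fieldType) (X : 'M[F]_3) :
  \tr (X * X * X) = trr (mulr3 (mulr3 (ofm X) (ofm X)) (ofm X)).
Proof. by rewrite -{1 2 3}(ofmK X) !tofm_mul; case: (mulr3 _ _) => * /=; rewrite tr3. Qed.

Definition nil3 {F : fieldType} (X : 'M[F]_3) :=
  [/\ \tr X = 0, \tr (X * X) = 0 & \tr (X * X * X) = 0].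
Definition tw {F : fieldType} (X Y : 'M[F]_3) w := trw (E12 F) X Y w.

Ltac cert h6 q1 q2 q3 q4 h2 h3 h4 h5 :=
  let T2 := lazymatch type of h2 with ?T = _ => T end in
  let T3 := lazymatch type of h3 with ?T = _ => T end in
  let T4 := lazymatch type of h4 with ?T = _ => T end in
  let T5 := lazymatch type of h5 with ?T = _ => T end in
  apply/eqP; rewrite -subr_eq0; apply/eqP;
  apply: (mulfI h6); rewrite mulr0;
  transitivity (q1 * T2 + q2 * T3 + q3 * T4 + q4 * T5);
  [ring | by rewrite h2 h3 h4 h5 !mulr0 !addr0].
Lemma I1 (F : fieldType) (h6 : (6%:R : F) != 0) (X Y : 'M[F]_3) : nil3 X -> nil3 Y ->
  tw X Y [:: 1; 2]%N * tw X Y [:: 2; 2; 3; 3; 1]%N =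
  - (tw X Y [:: 1; 3; 2]%N * tw X Y [:: 2; 2; 3; 1]%N) + - (tw X Y [:: 1; 3]%N * tw X Y [:: 2; 2; 1; 2; 3]%N) + - (tw X Y [:: 1; 2; 2]%N * tw X Y [:: 3; 3; 2; 1]%N) + tw X Y [:: 1; 2; 2]%N * tw X Y [:: 1; 3]%N * tw X Y [:: 2; 3]%N + tw X Y [:: 1; 2]%N * tw X Y [:: 1; 3]%N * tw X Y [:: 2; 2; 3]%N.
Proof.
move=> hX hY.
case: hX => hx1 hx2 hx3; case: hY => hy1 hy2 hy3.
  move: hx1 hx2 hx3 hy1 hy2 hy3.
  rewrite /tw !trw_r trm_r trm2_r trm3_r trm_r trm2_r trm3_r /=.
  move: (X i0 i0) (X i0 i1) (X i0 i2) (X i1 i0) (X i1 i1) (X i1 i2) (X i2 i0) (X i2 i1) (X i2 i2)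
        (Y i0 i0) (Y i0 i1) (Y i0 i2) (Y i1 i0) (Y i1 i1) (Y i1 i2) (Y i2 i0) (Y i2 i1) (Y i2 i2)
   => x00 x01 x02 x10 x11 x12 x20 x21 x22 y00 y01 y02 y10 y11 y12 y20 y21 y22.
  move=> hx1 hx2 hx3 hy1 hy2 hy3.
  have ex : x22 = (x00 + x11 + x22) - x00 - x11 by ring.
  have ey : y22 = (y00 + y11 + y22) - y00 - y11 by ring.
  rewrite hx1 sub0r in ex; rewrite hy1 sub0r in ey; subst x22 y22.
cert h6 (3%:R*x10*y12*y20 + 3%:R*x10*y10*y11 + 3%:R*x10*y00*y10)
     (- 2%:R*y10*y10)
     (3%:R*x10*x12*x20 + 3%:R*x10*x10*x11 + 3%:R*x00*x10*x10)
     (0:F) hx2 hx3 hy2 hy3.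
Qed.

Lemma I2 (F : fieldType) (h6 : (6%:R : F) != 0) (X Y : 'M[F]_3) : nil3 X -> nil3 Y ->
  tw X Y [:: 1; 2; 2]%N * tw X Y [:: 2; 2; 3; 3; 1]%N =
  - (tw X Y [:: 2; 2; 1; 3]%N * tw X Y [:: 2; 2; 1; 3]%N) + - (tw X Y [:: 2; 2; 3; 1]%N * tw X Y [:: 2; 2; 1; 3]%N) + - (tw X Y [:: 1; 3; 2]%N * tw X Y [:: 2; 2; 1; 2; 3]%N) + tw X Y [:: 1; 2]%N * tw X Y [:: 2; 2; 3; 3; 2; 1]%N + tw X Y [:: 1; 2]%N * tw X Y [:: 2; 2; 1; 3]%N * tw X Y [:: 2; 3]%N + - (tw X Y [:: 1; 2]%N * tw X Y [:: 1; 2]%N * tw X Y [:: 2; 2; 3; 3]%N).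
Proof.
move=> hX hY.
case: hX => hx1 hx2 hx3; case: hY => hy1 hy2 hy3.
  move: hx1 hx2 hx3 hy1 hy2 hy3.
  rewrite /tw !trw_r trm_r trm2_r trm3_r trm_r trm2_r trm3_r /=.
  move: (X i0 i0) (X i0 i1) (X i0 i2) (X i1 i0) (X i1 i1) (X i1 i2) (X i2 i0) (X i2 i1) (X i2 i2)
        (Y i0 i0) (Y i0 i1) (Y i0 i2) (Y i1 i0) (Y i1 i1) (Y i1 i2) (Y i2 i0) (Y i2 i1) (Y i2 i2)
   => x00 x01 x02 x10 x11 x12 x20 x21 x22 y00 y01 y02 y10 y11 y12 y20 y21 y22.
  move=> hx1 hx2 hx3 hy1 hy2 hy3.
  have ex : x22 = (x00 + x11 + x22) - x00 - x11 by ring.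
  have ey : y22 = (y00 + y11 + y22) - y00 - y11 by ring.
  rewrite hx1 sub0r in ex; rewrite hy1 sub0r in ey; subst x22 y22.
cert h6 (3%:R*x12*x20*y12*y20 + 6%:R*x12*x20*y10*y11 + 3%:R*x12*x20*y00*y10 -  3%:R*x11*x20*y10*y12 + 3%:R*x10*x21*y10*y12 -  3%:R*x10*x20*y02*y10 + 3%:R*x10*x20*y00*y12 + 3%:R*x10*x11*y12*y20 + 6%:R*x10*x11*y10*y11 + 3%:R*x10*x11*y00*y10 + 3%:R*x10*x10*y02*y20 + 3%:R*x10*x10*y00*y11 + 3%:R*x10*x10*y00*y00 + 3%:R*x02*x20*y10*y10 + 3%:R*x01*x10*y10*y10 + 3%:R*x00*x10*y10*y11 + 3%:R*x00*x00*y10*y10)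
     (2%:R*x10*y12*y20 + 2%:R*x10*y10*y11 + 2%:R*x10*y00*y10)
     (3%:R*x12*x12*x20*x20 + 6%:R*x10*x11*x12*x20 + 3%:R*x10*x10*x11*x11 + 6%:R*x00*x10*x12*x20 + 6%:R*x00*x10*x10*x11 + 3%:R*x00*x00*x10*x10)
     (0:F) hx2 hx3 hy2 hy3.
Qed.

Lemma I3 (F : fieldType) (h6 : (6%:R : F) != 0) (X Y : 'M[F]_3) : nil3 X -> nil3 Y ->
  tw X Y [:: 1; 2]%N * tw X Y [:: 2; 2; 3; 3; 2; 1]%N =
  tw X Y [:: 1; 2; 2]%N * tw X Y [:: 2; 2; 3; 3; 1]%N + tw X Y [:: 2; 2; 1; 3]%N * tw X Y [:: 2; 2; 1; 3]%N + tw X Y [:: 2; 2; 3; 1]%N * tw X Y [:: 2; 2; 1; 3]%N + tw X Y [:: 1; 3; 2]%N * tw X Y [:: 2; 2; 1; 2; 3]%N + - (tw X Y [:: 1; 2]%N * tw X Y [:: 2; 2; 1; 3]%N * tw X Y [:: 2; 3]%N) + tw X Y [:: 1; 2]%N * tw X Y [:: 1; 2]%N * tw X Y [:: 2; 2; 3; 3]%N.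
Proof.
move=> hX hY.
case: hX => hx1 hx2 hx3; case: hY => hy1 hy2 hy3.
  move: hx1 hx2 hx3 hy1 hy2 hy3.
  rewrite /tw !trw_r trm_r trm2_r trm3_r trm_r trm2_r trm3_r /=.
  move: (X i0 i0) (X i0 i1) (X i0 i2) (X i1 i0) (X i1 i1) (X i1 i2) (X i2 i0) (X i2 i1) (X i2 i2)
        (Y i0 i0) (Y i0 i1) (Y i0 i2) (Y i1 i0) (Y i1 i1) (Y i1 i2) (Y i2 i0) (Y i2 i1) (Y i2 i2)
   => x00 x01 x02 x10 x11 x12 x20 x21 x22 y00 y01 y02 y10 y11 y12 y20 y21 y22.
  move=> hx1 hx2 hx3 hy1 hy2 hy3.
  have ex : x22 = (x00 + x11 + x22) - x00 - x11 by ring.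
  have ey : y22 = (y00 + y11 + y22) - y00 - y11 by ring.
  rewrite hx1 sub0r in ex; rewrite hy1 sub0r in ey; subst x22 y22.
cert h6 (- 3%:R*x12*x20*y12*y20 -  6%:R*x12*x20*y10*y11 -  3%:R*x12*x20*y00*y10 + 3%:R*x11*x20*y10*y12 -  3%:R*x10*x21*y10*y12 + 3%:R*x10*x20*y02*y10 -  3%:R*x10*x20*y00*y12 -  3%:R*x10*x11*y12*y20 -  6%:R*x10*x11*y10*y11 -  3%:R*x10*x11*y00*y10 -  3%:R*x10*x10*y02*y20 -  3%:R*x10*x10*y00*y11 -  3%:R*x10*x10*y00*y00 -  3%:R*x02*x20*y10*y10 -  3%:R*x01*x10*y10*y10 -  3%:R*x00*x10*y10*y11 -  3%:R*x00*x00*y10*y10)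
     (- 2%:R*x10*y12*y20 -  2%:R*x10*y10*y11 -  2%:R*x10*y00*y10)
     (- 3%:R*x12*x12*x20*x20 -  6%:R*x10*x11*x12*x20 -  3%:R*x10*x10*x11*x11 -  6%:R*x00*x10*x12*x20 -  6%:R*x00*x10*x10*x11 -  3%:R*x00*x00*x10*x10)
     (0:F) hx2 hx3 hy2 hy3.
Qed.

Lemma I4 (F : fieldType) (h6 : (6%:R : F) != 0) (X Y : 'M[F]_3) : nil3 X -> nil3 Y ->
  tw X Y [:: 1; 2; 2]%N * tw X Y [:: 2; 2; 3; 3; 2; 1]%N =
  tw X Y [:: 2; 2; 3; 1]%N * tw X Y [:: 2; 2; 1; 2; 3]%N + - (tw X Y [:: 1; 2; 2]%N * tw X Y [:: 1; 2; 3]%N * tw X Y [:: 2; 2; 3]%N) + tw X Y [:: 1; 2; 2]%N * tw X Y [:: 1; 2; 2]%N * tw X Y [:: 2; 3; 3]%N.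
Proof.
move=> hX hY.
case: hX => hx1 hx2 hx3; case: hY => hy1 hy2 hy3.
  move: hx1 hx2 hx3 hy1 hy2 hy3.
  rewrite /tw !trw_r trm_r trm2_r trm3_r trm_r trm2_r trm3_r /=.
  move: (X i0 i0) (X i0 i1) (X i0 i2) (X i1 i0) (X i1 i1) (X i1 i2) (X i2 i0) (X i2 i1) (X i2 i2)
        (Y i0 i0) (Y i0 i1) (Y i0 i2) (Y i1 i0) (Y i1 i1) (Y i1 i2) (Y i2 i0) (Y i2 i1) (Y i2 i2)
   => x00 x01 x02 x10 x11 x12 x20 x21 x22 y00 y01 y02 y10 y11 y12 y20 y21 y22.
  move=> hx1 hx2 hx3 hy1 hy2 hy3.
  have ex : x22 = (x00 + x11 + x22) - x00 - x11 by ring.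
  have ey : y22 = (y00 + y11 + y22) - y00 - y11 by ring.
  rewrite hx1 sub0r in ex; rewrite hy1 sub0r in ey; subst x22 y22.
cert h6 (- 3%:R*x12*x12*x20*y10*y21 -  3%:R*x12*x12*x20*y00*y20 -  6%:R*x11*x12*x20*y10*y11 -  6%:R*x11*x12*x20*y00*y10 + 3%:R*x11*x11*x20*y10*y12 + 3%:R*x10*x12*x21*y10*y11 + 3%:R*x10*x12*x21*y00*y10 + 3%:R*x10*x12*x20*y12*y21 + 3%:R*x10*x12*x20*y11*y11 + 3%:R*x10*x12*x20*y02*y20 + 3%:R*x10*x12*x20*y00*y11 -  3%:R*x10*x11*x21*y10*y12 + 3%:R*x10*x11*x20*y02*y10 -  3%:R*x10*x11*x12*y10*y21 -  3%:R*x10*x11*x12*y00*y20 -  3%:R*x10*x11*x11*y10*y11 -  3%:R*x10*x11*x11*y00*y10 -  3%:R*x10*x10*x21*y02*y10 + 3%:R*x10*x10*x11*y12*y21 + 3%:R*x10*x10*x11*y11*y11 + 3%:R*x10*x10*x11*y02*y20 + 3%:R*x10*x10*x11*y00*y11 -  3%:R*x02*x10*x12*y20*y20 -  3%:R*x02*x10*x11*y10*y20 -  3%:R*x02*x10*x10*y00*y20 -  3%:R*x01*x10*x12*y10*y20 -  3%:R*x01*x10*x11*y10*y10 -  3%:R*x01*x10*x10*y00*y10 + 3%:R*x00*x12*x12*y20*y20 + 6%:R*x00*x11*x12*y10*y20 + 3%:R*x00*x11*x11*y10*y10 -  3%:R*x00*x10*x12*y10*y21 -  3%:R*x00*x10*x11*y10*y11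 + 3%:R*x00*x10*x10*y12*y21 + 3%:R*x00*x10*x10*y11*y11 + 3%:R*x00*x10*x10*y02*y20 + 3%:R*x00*x10*x10*y00*y11)
     (- 2%:R*x12*x20*y10*y11 -  2%:R*x12*x20*y00*y10 + 2%:R*x12*x12*y20*y20 + 2%:R*x11*x20*y10*y12 + 4%:R*x11*x12*y10*y20 + 2%:R*x11*x11*y10*y10 + 2%:R*x10*x20*y02*y10 + 2%:R*x10*x12*y11*y20 + 4%:R*x10*x12*y00*y20 -  2%:R*x10*x11*y12*y20 + 2%:R*x10*x11*y00*y10 -  2%:R*x10*x10*y02*y20 + 2%:R*x00*x12*y10*y20 + 2%:R*x00*x11*y10*y10 + 2%:R*x00*x10*y00*y10)
     (0:F)
     (0:F) hx2 hx3 hy2 hy3.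
Qed.

Ltac cert2 h6 q1 q2 h2 h3 :=
  let T2 := lazymatch type of h2 with ?T = _ => T end in
  let T3 := lazymatch type of h3 with ?T = _ => T end in
  apply/eqP; rewrite -subr_eq0; apply/eqP;
  apply: (mulfI h6); rewrite mulr0;
  transitivity (q1 * T2 + q2 * T3);
  [ring | by rewrite h2 h3 !mulr0 !addr0].

Lemma Z13 (F : fieldType) (h6 : (6%:R : F) != 0) (h2 : (2%:R : F) != 0) (X Y : 'M[F]_3) :
  nil3 X -> nil3 Y -> tw X Y [:: 1; 2]%N = 0 -> tw X Y [:: 1; 2; 2]%N = 0 ->
  tw X Y [:: 2; 2; 3; 3; 1]%N = 0 /\ tw X Y [:: 2; 2; 3; 3; 2; 1]%N = 0.
Proof.
move=> hX hY hk1 hk2.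
case: hX => hx1 hx2 hx3; case: hY => hy1 hy2 hy3.
move: hx1 hx2 hx3 hy1 hy2 hy3 hk1 hk2.
rewrite /tw !trw_r trm_r trm2_r trm3_r trm_r trm2_r trm3_r /=.
move: (X i0 i0) (X i0 i1) (X i0 i2) (X i1 i0) (X i1 i1) (X i1 i2) (X i2 i0) (X i2 i1) (X i2 i2)
      (Y i0 i0) (Y i0 i1) (Y i0 i2) (Y i1 i0) (Y i1 i1) (Y i1 i2) (Y i2 i0) (Y i2 i1) (Y i2 i2)
 => x00 x01 x02 x10 x11 x12 x20 x21 x22 y00 y01 y02 y10 y11 y12 y20 y21 y22.
move=> hx1 hx2 hx3 hy1 hy2 hy3 hk1 hk2.
have ex : x22 = (x00 + x11 + x22) - x00 - x11 by ring.
have ey : y22 = (y00 + y11 + y22) - y00 - y11 by ring.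
rewrite hx1 sub0r in ex; rewrite hy1 sub0r in ey; subst x22 y22.
have e10 : x10 = 0 by rewrite -hk1; ring.
subst x10.
have : x12 * x20 = 0 by rewrite -hk2; ring.
move/eqP; rewrite mulf_eq0 => /orP [] /eqP e; subst.
- have : x11 ^+ 3 = 0 by cert2 h6 (3%:R * x11) (2%:R : F) hx2 hx3.
  move/eqP; rewrite expf_eq0 /= => /eqP e; subst x11.
  by split; ring.
- have : x00 ^+ 3 = 0 by cert2 h6 (3%:R * x00) (2%:R : F) hx2 hx3.
  move/eqP; rewrite expf_eq0 /= => /eqP e; subst x00.
  have hq : x11 * x11 + x12 * x21 = 0.
    by apply: (mulfI h2); rewrite mulr0 -hx2; ring.
  split; last by ring.
  transitivity ((x11 * x11 + x12 * x21) * (y10 * y00 + y11 * y10 + y12 * y20)).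
    by ring.
  by rewrite hq mul0r.
Qed.

Lemma nil_tr0 (F : closedFieldType) n (A : 'M[F]_n.+1) k : A ^+ k = 0 -> \tr A = 0.
Proof.
move=> Ak.
have [r Hr] := closed_field_poly_normal (char_poly A).
rewrite (monicP (char_poly_monic A)) scale1r in Hr.
have hm : horner_mx A ('X^k) = 0 by rewrite rmorphXn /= horner_mx_X.
have r0 : forall z, z \in r -> z = 0.
  move=> z zr.
  have : root (char_poly A) z by rewrite Hr root_prod_XsubC.
  rewrite -root_mxminpoly => /(root_dvdp (mxminpoly_min hm)).
  by rewrite rootE hornerXn => /eqP/eqP; rewrite expf_eq0 => /andP [_ /eqP].
have Hc : char_poly A = 'X^(size r).
  rewrite Hr; elim: r r0 {Hr} => [|z r IH] r0; first by rewrite big_nil expr0.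
  rewrite big_cons (r0 z (mem_head _ _)) subr0 IH ?exprS // => y yr.
  by apply: r0; rewrite inE yr orbT.
have := size_char_poly A; rewrite Hc size_polyXn => -[sr].
have := char_poly_trace A (ltn0Sn n); rewrite Hc coefXn sr => h.
apply/eqP; rewrite -oppr_eq0 -h.
by rewrite eqn_leq ltnn andbF.
Qed.

Lemma nilp_nil3 (F : closedFieldType) (X : 'M[F]_3) : nilpotent_mx X -> nil3 X.
Proof.
move=> [k Xk]; split.
- exact: nil_tr0 Xk.
- apply: (@nil_tr0 _ _ _ k).
  by rewrite -expr2 -exprM mulnC exprM Xk expr0n.
- apply: (@nil_tr0 _ _ _ k).
  by rewrite -mulrA -expr2 -exprS -exprM mulnC exprM Xk expr0n.
Qed.

Definition sw (i : nat) : nat := match i with 1 => 1 | 2 => 3 | _ => 2 end%N.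
Lemma tw_swap (F : fieldType) (X Y : 'M[F]_3) w : tw Y X w = tw X Y (map sw w).
Proof.
rewrite /tw /trw big_map; congr (\tr _); apply: eq_bigr => i _.
by case: i => [|[|[|i]]].
Qed.
Lemma cyc1 (F : fieldType) (X Y : 'M[F]_3) : tw X Y [:: 3; 2]%N = tw X Y [:: 2; 3]%N.
Proof. rewrite /tw !trw_r /=; ring. Qed.
Lemma cyc2 (F : fieldType) (X Y : 'M[F]_3) : tw X Y [:: 3; 3; 2]%N = tw X Y [:: 2; 3; 3]%N.
Proof. rewrite /tw !trw_r /=; ring. Qed.
Lemma cyc3 (F : fieldType) (X Y : 'M[F]_3) : tw X Y [:: 3; 2; 2]%N = tw X Y [:: 2; 2; 3]%N.
Proof. rewrite /tw !trw_r /=; ring. Qed.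
Lemma cyc4 (F : fieldType) (X Y : 'M[F]_3) : tw X Y [:: 3; 3; 2; 2]%N = tw X Y [:: 2; 2; 3; 3]%N.
Proof. rewrite /tw !trw_r /=; ring. Qed.
Lemma zw0 (F : fieldType) (X Y : 'M[F]_3) : trw (E12 F) X Y [:: 1; 1; 2; 2; 3]%N = 0.
Proof. rewrite trw_r /=; ring. Qed.

Lemma zw1 (F : fieldType) (X Y : 'M[F]_3) : trw (E12 F) X Y [:: 1; 1; 2; 2; 1; 3]%N = 0.
Proof. rewrite trw_r /=; ring. Qed.

Lemma zw2 (F : fieldType) (X Y : 'M[F]_3) : trw (E12 F) X Y [:: 1; 1; 3; 3; 2]%N = 0.
Proof. rewrite trw_r /=; ring. Qed.

Lemma zw3 (F : fieldType) (X Y : 'M[F]_3) : trw (E12 F) X Y [:: 1; 1; 3; 3; 1; 2]%N = 0.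
Proof. rewrite trw_r /=; ring. Qed.

Lemma zw4 (F : fieldType) (X Y : 'M[F]_3) : trw (E12 F) X Y [:: 2; 2; 1; 1; 3]%N = 0.
Proof. rewrite trw_r /=; ring. Qed.

Lemma zw5 (F : fieldType) (X Y : 'M[F]_3) : trw (E12 F) X Y [:: 2; 2; 1; 1; 2; 3]%N = 0.
Proof. rewrite trw_r /=; ring. Qed.

Lemma zw6 (F : fieldType) (X Y : 'M[F]_3) : trw (E12 F) X Y [:: 3; 3; 1; 1; 2]%N = 0.
Proof. rewrite trw_r /=; ring. Qed.

Lemma zw7 (F : fieldType) (X Y : 'M[F]_3) : trw (E12 F) X Y [:: 3; 3; 1; 1; 3; 2]%N = 0.
Proof. rewrite trw_r /=; ring. Qed.

Lemma zw8 (F : fieldType) (X Y : 'M[F]_3) : trw (E12 F) X Y [:: 1; 1; 2; 2; 3; 3]%N = 0.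
Proof. rewrite trw_r /=; ring. Qed.

Definition Kw : seq (seq nat) := [:: [:: 1; 2]%N; [:: 1; 2; 2]%N; [:: 1; 3]%N; [:: 1; 3; 3]%N; [:: 1; 2; 3]%N; [:: 1; 3; 2]%N; [:: 2; 2; 3; 1]%N; [:: 2; 2; 1; 3]%N; [:: 3; 3; 1; 2]%N; [:: 3; 3; 2; 1]%N; [:: 2; 2; 1; 2; 3]%N; [:: 3; 3; 1; 3; 2]%N; [:: 2; 3]%N; [:: 2; 2; 3]%N; [:: 2; 3; 3]%N; [:: 2; 2; 3; 3]%N].

Lemma core13 (F : fieldType) (h6 : (6%:R : F) != 0) (h2 : (2%:R : F) != 0)
  (X Y X' Y' : 'M[F]_3) : nil3 X -> nil3 Y -> nil3 X' -> nil3 Y' ->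
  (forall w, w \in Kw -> tw X Y w = tw X' Y' w) ->
  tw X Y [:: 2; 2; 3; 3; 1]%N = tw X' Y' [:: 2; 2; 3; 3; 1]%N /\ tw X Y [:: 2; 2; 3; 3; 2; 1]%N = tw X' Y' [:: 2; 2; 3; 3; 2; 1]%N.
Proof.
move=> nX nY nX' nY' hK.
have e0 : tw X Y [:: 1; 2]%N = tw X' Y' [:: 1; 2]%N := hK [:: 1; 2]%N isT.
have e1 : tw X Y [:: 1; 2; 2]%N = tw X' Y' [:: 1; 2; 2]%N := hK [:: 1; 2; 2]%N isT.
have e2 : tw X Y [:: 1; 3]%N = tw X' Y' [:: 1; 3]%N := hK [:: 1; 3]%N isT.
have e3 : tw X Y [:: 1; 3; 3]%N = tw X' Y' [:: 1; 3; 3]%N := hK [:: 1; 3; 3]%N isT.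
have e4 : tw X Y [:: 1; 2; 3]%N = tw X' Y' [:: 1; 2; 3]%N := hK [:: 1; 2; 3]%N isT.
have e5 : tw X Y [:: 1; 3; 2]%N = tw X' Y' [:: 1; 3; 2]%N := hK [:: 1; 3; 2]%N isT.
have e6 : tw X Y [:: 2; 2; 3; 1]%N = tw X' Y' [:: 2; 2; 3; 1]%N := hK [:: 2; 2; 3; 1]%N isT.
have e7 : tw X Y [:: 2; 2; 1; 3]%N = tw X' Y' [:: 2; 2; 1; 3]%N := hK [:: 2; 2; 1; 3]%N isT.
have e8 : tw X Y [:: 3; 3; 1; 2]%N = tw X' Y' [:: 3; 3; 1; 2]%N := hK [:: 3; 3; 1; 2]%N isT.
have e9 : tw X Y [:: 3; 3; 2; 1]%N = tw X' Y' [:: 3; 3; 2; 1]%N := hK [:: 3; 3; 2; 1]%N isT.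
have e10 : tw X Y [:: 2; 2; 1; 2; 3]%N = tw X' Y' [:: 2; 2; 1; 2; 3]%N := hK [:: 2; 2; 1; 2; 3]%N isT.
have e11 : tw X Y [:: 3; 3; 1; 3; 2]%N = tw X' Y' [:: 3; 3; 1; 3; 2]%N := hK [:: 3; 3; 1; 3; 2]%N isT.
have e12 : tw X Y [:: 2; 3]%N = tw X' Y' [:: 2; 3]%N := hK [:: 2; 3]%N isT.
have e13 : tw X Y [:: 2; 2; 3]%N = tw X' Y' [:: 2; 2; 3]%N := hK [:: 2; 2; 3]%N isT.
have e14 : tw X Y [:: 2; 3; 3]%N = tw X' Y' [:: 2; 3; 3]%N := hK [:: 2; 3; 3]%N isT.
have e15 : tw X Y [:: 2; 2; 3; 3]%N = tw X' Y' [:: 2; 2; 3; 3]%N := hK [:: 2; 2; 3; 3]%N isT.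
have I1a := I1 h6 nX nY; have I1b := I1 h6 nX' nY'.
have I2a := I2 h6 nX nY; have I2b := I2 h6 nX' nY'.
have I3a := I3 h6 nX nY; have I3b := I3 h6 nX' nY'.
have I4a := I4 h6 nX nY; have I4b := I4 h6 nX' nY'.
case: (eqVneq (tw X Y [:: 1; 2]%N) 0) => [k10|k1n0].
  have k10' : tw X' Y' [:: 1; 2]%N = 0 by rewrite -e0.
  case: (eqVneq (tw X Y [:: 1; 2; 2]%N) 0) => [k20|k2n0].
    have k20' : tw X' Y' [:: 1; 2; 2]%N = 0 by rewrite -e1.
    have [a1 a3] := Z13 h6 h2 nX nY k10 k20.
    have [b1 b3] := Z13 h6 h2 nX' nY' k10' k20'.
    by rewrite a1 a3 b1 b3.
  have et1 : tw X Y [:: 2; 2; 3; 3; 1]%N = tw X' Y' [:: 2; 2; 3; 3; 1]%N.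
    apply: (mulfI k2n0); rewrite I2a e1 I2b ?e0 ?e1 ?e2 ?e3 ?e4 ?e5 ?e6 ?e7 ?e8 ?e9 ?e10 ?e11 ?e12 ?e13 ?e14 ?e15.
    by rewrite k10' !mul0r.
  split=> //.
  apply: (mulfI k2n0); rewrite I4a e1 I4b ?e0 ?e1 ?e2 ?e3 ?e4 ?e5 ?e6 ?e7 ?e8 ?e9 ?e10 ?e11 ?e12 ?e13 ?e14 ?e15.
  by [].
have et1 : tw X Y [:: 2; 2; 3; 3; 1]%N = tw X' Y' [:: 2; 2; 3; 3; 1]%N.
  apply: (mulfI k1n0); rewrite I1a e0 I1b ?e0 ?e1 ?e2 ?e3 ?e4 ?e5 ?e6 ?e7 ?e8 ?e9 ?e10 ?e11 ?e12 ?e13 ?e14 ?e15.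
  by [].
split=> //.
apply: (mulfI k1n0); rewrite I3a e0 I3b ?e0 ?e1 ?e2 ?e3 ?e4 ?e5 ?e6 ?e7 ?e8 ?e9 ?e10 ?e11 ?e12 ?e13 ?e14 ?e15 et1.
by [].
Qed.

Theorem lemma7p1 (F : closedFieldType) (hchar : [pchar F] =i pred0)
    (A2 A3 B2 B3 : 'M[F]_3) :
  nilpotent_mx (E12 F) -> nilpotent_mx A2 -> nilpotent_mx A3 ->
  nilpotent_mx B2 -> nilpotent_mx B3 ->
  (forall w, w \in S33 -> trw (E12 F) A2 A3 w = trw (E12 F) B2 B3 w) ->
  forall w, w \in P33 -> trw (E12 F) A2 A3 w = trw (E12 F) B2 B3 w.
Proof.
move=> _ nA2 nA3 nB2 nB3 hS.
have [h2 h6] : (2%:R : F) != 0 /\ (6%:R : F) != 0.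
  by move/pcharf0P: hchar => h; rewrite !h.
have n2 := nilp_nil3 nA2; have n3 := nilp_nil3 nA3.
have n2' := nilp_nil3 nB2; have n3' := nilp_nil3 nB3.
have sub : forall w, w \in Kw -> tw A2 A3 w = tw B2 B3 w.
  move=> v vK; apply: hS; move: v vK; apply/allP; exact: isT.
have [e1 e3] := core13 h6 h2 n2 n3 n2' n3' sub.
have subs : forall w, w \in Kw -> tw A3 A2 w = tw B3 B2 w.
  move=> v vK; rewrite (tw_swap A2 A3) (tw_swap B2 B3).
  have : (map sw v \in S33) ||
         (map sw v \in [:: [:: 3; 2]; [:: 3; 3; 2]; [:: 3; 2; 2]; [:: 3; 3; 2; 2]]%N).
    move: v vK; apply/allP; exact: isT.
  case/orP => [/hS h | ]; first exact: h.
  rewrite !inE => /or4P [] /eqP ->; rewrite ?cyc1 ?cyc2 ?cyc3 ?cyc4; apply: hS; exact: isT.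
have [e2 e4] := core13 h6 h2 n3 n2 n3' n2' subs.
rewrite (tw_swap A2 A3) (tw_swap B2 B3) /= in e2; rewrite (tw_swap A2 A3) (tw_swap B2 B3) /= in e4.
rewrite /tw in e1 e2 e3 e4.
move=> w; rewrite mem_cat => /orP [/hS // | ].
suff: all (fun w => trw (E12 F) A2 A3 w == trw (E12 F) B2 B3 w) P'33.
  by move/allP => h /h /eqP.
rewrite /P'33 /= !zw0 !zw1 !zw2 !zw3 !zw4 !zw5 !zw6 !zw7 !zw8 e1 e2 e3 e4.
by rewrite !eqxx.
Qed.
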